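(* For every knot diagram $D$ and every Dehn $p$-coloring $C$ of $D$, $\partial_2^{\rm SLB}(W(D,C))=0$ in $C_1^{\rm SLB}(\mathbb Z_p)$.
   Context: Let $p$ be an odd prime, $X=\mathbb Z_p$, $[a,b,c]=a-b+c$, $\rho((a,b))=(b,a)$, $(a,b)\,\underline{\star}\,(a,c)=(c,[a,b,c])$, $(a,b)\,\overline{\star}\,(a,c)=(c,[a,c,b])$. For $n\ge1$ let $C_n^{\rm lb}(X)$ be the free abelian group on tuples $((a,b_1),\dots,(a,b_n))$, $a,b_i\in X$ (zero for $n\le 0$), with $\partial_n^{\rm lb}$ for $n\ge 2$ given by $\sum_{i=1}^n(-1)^i\{((a,b_1),\dots,\widehat{(a,b_i)},\dots,(a,b_n))-((b_i,[a,b_1,b_i]),\dots,(b_i,[a,b_{i-1},b_i]),(b_i,[a,b_i,b_{i+1}]),\dots,(b_i,[a,b_i,b_n]))\}$ and $\partial_n^{\rm lb}=0$ for $n\le1$; in particular $\partial_2^{\rm lb}((a,b),(a,c))=-(a,c)+(a,b)+(b,[a,b,c])-(c,[a,b,c])$. Let $D_n^{\rm lb}(X)$ be generated by tuples with $b_i=b_{i+1}$ for some $i$, $D_n^{\rm lb}(X,\rho)$ generated by all $((a,b_1),\dots,(a,b_n))+((a,b_1)\underline\star(a,b_i),\dots,(a,b_{i-1})\underline\star(a,b_i),\rho((a,b_i)),(a,b_{i+1})\overline\star(a,b_i),\dots,(a,b_n)\overline\star(a,b_i))$; $C_n^{\rm SLB}(X)=C_n^{\rm lb}(X)/(D_n^{\rm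 lb}(X)+D_n^{\rm lb}(X,\rho))$ with induced boundary $\partial_n^{\rm SLB}$. Dehn $p$-colorings: for a knot diagram $D$ with region set $\mathcal R(D)$, at each crossing label the four regions $x_1,x_2,x_3,x_4$ so that $x_2$ is adjacent to $x_1$ across an under-arc, $x_3$ adjacent to $x_1$ across the over-arc, $x_4$ opposite $x_1$; a Dehn $p$-coloring is $C:\mathcal R(D)\to\mathbb Z_p$ with $C(x_1)+C(x_3)=C(x_2)+C(x_4)$ at every crossing. At each crossing $\chi$ choose a specified region $x_1$, put $a=C(x_1),b=C(x_2),c=C(x_3)$ and $w_\chi=\varepsilon((a,b),(a,c))\in C_2^{\rm SLB}(X)$, with $\varepsilon=+1$ if $(n_o,n_u)$ is a positively oriented basis of $\mathbb R^2$ and $-1$ otherwise ($n_u$ the normal vector from $x_1$ to $x_2$, $n_o$ from $x_1$ to $x_3$). $W(D,C)=\sum_\chi w_\chi\in C_2^{\rm SLB}(X)$; it is independent of the choices of specified regions. *)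

(* Defs.v *)
From mathcomp Require Import all_boot all_order all_algebra.
Set Implicit Arguments. Unset Strict Implicit. Unset Printing Implicit Defensive.
Import GRing.Theory.
Local Open Scope ring_scope.

(* A generator ((a,b_1),...,(a,b_n)) is encoded as (a, [:: b_1;..;b_n]). *)
(* A chain (element of the free abelian group) is a formal integer      *)
(* combination, i.e. a list of (coefficient, generator); two chains are  *)
(* equal iff their coefficient functions [cf] agree.                    *)

Definition br (X : zmodType) (a b c : X) : X := a - b + c.

Definition lbgen (X : zmodType) := (X * seq X)%type.
Definition lbchain (X : zmodType) := seq (int * lbgen X).

Definition cf (X : zmodType) (z : lbchain X) (g : lbgen X) : int :=
  \sum_(kg <- z | kg.2 == g) kg.1.

Definition scale_chain (X : zmodType) (k : int) (z : lbchain X) : lbchain X :=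
  [seq (k * kg.1, kg.2) | kg <- z].

Definition lincomb (X : zmodType) (l : seq (int * lbchain X)) : lbchain X :=
  flatten [seq scale_chain kc.1 kc.2 | kc <- l].

(* (i+1)-th face: delete the (i+1)-th entry (0-based index i) *)
Definition face (X : zmodType) (g : lbgen X) (i : nat) : lbgen X :=
  (g.1, take i g.2 ++ drop i.+1 g.2).

(* (i+1)-th coface:
   ((b_i,[a,b_1,b_i]),...,(b_i,[a,b_{i-1},b_i]),(b_i,[a,b_i,b_{i+1}]),...,(b_i,[a,b_i,b_n])) *)
Definition coface (X : zmodType) (g : lbgen X) (i : nat) : lbgen X :=
  let a := g.1 in let bs := g.2 in let bi := nth 0 bs i in
  (bi, [seq br a (nth 0 bs j) bi | j <- iota 0 i]
       ++ [seq br a bi (nth 0 bs j) | j <- iota i.+1 (size bs - i.+1)]).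

Definition bd_gen (X : zmodType) (g : lbgen X) : lbchain X :=
  if (size g.2 <= 1)%N then [::] else
  flatten [seq [:: ((-1) ^+ i.+1, face g i); (- (-1) ^+ i.+1, coface g i)]
          | i <- iota 0 (size g.2)].

Definition bd (X : zmodType) (z : lbchain X) : lbchain X :=
  flatten [seq scale_chain kg.1 (bd_gen kg.2) | kg <- z].

Definition degen_rel (X : zmodType) (n : nat) (r : lbchain X) : Prop :=
  exists a bs, [/\ size bs = n,
    (exists2 i, (i.+1 < n)%N & nth 0 bs i = nth 0 bs i.+1)
    & r = [:: (1, (a, bs))]].

(* ((a,b_1)*_(a,b_i),...,rho(a,b_i),...,(a,b_n)*^-(a,b_i)) with
   (a,b)*_(a,c) = (c,[a,b,c]), (a,b)*^-(a,c) = (c,[a,c,b]), rho(a,b) = (b,a) *)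
Definition rho_gen (X : zmodType) (g : lbgen X) (i : nat) : lbgen X :=
  let a := g.1 in let bs := g.2 in let bi := nth 0 bs i in
  (bi, [seq br a (nth 0 bs j) bi | j <- iota 0 i]
       ++ a :: [seq br a bi (nth 0 bs j) | j <- iota i.+1 (size bs - i.+1)]).

Definition rho_rel (X : zmodType) (n : nat) (r : lbchain X) : Prop :=
  exists a bs i, [/\ size bs = n, (i < n)%N &
    r = [:: (1, (a, bs)); (1, rho_gen (a, bs) i)]].

(* z lies in D_n^lb(X) + D_n^lb(X,rho), i.e. z = 0 in C_n^SLB(X) *)
Definition zero_SLB (X : zmodType) (n : nat) (z : lbchain X) : Prop :=
  exists l : seq (int * lbchain X),
    (forall kr, kr \in l -> degen_rel n kr.2 \/ rho_rel n kr.2) /\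
    cf z =1 cf (lincomb l).

(* Knot diagrams as combinatorial maps on a finite set H of darts:     *)
(*  sigma = counterclockwise rotation of darts around their crossing,   *)
(*  alpha = the other half of the same edge,                           *)
(*  over d = the dart d lies on the over-arc of its crossing.          *)
(* The corner (region germ) between d and sigma d is labelled by d;    *)
(* corners d and phi d := sigma^-1 (alpha d) lie in the same region,   *)
(* and regions are the phi-orbits.                                     *)

Definition phi (H : finType) (sigma alpha : H -> H) (d : H) : H :=
  iter 3 sigma (alpha d).

(* straight-ahead continuation along a strand *)
Definition tau (H : finType) (sigma alpha : H -> H) (d : H) : H :=
  iter 2 sigma (alpha d).

Definition adj (H : finType) (sigma alpha : H -> H) : rel H :=
  fun u v => (v == sigma u) || (v == alpha u).

Definition is_knot_diagram (H : finType) (sigma alpha : H -> H) (over : H -> bool)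
  : Prop :=
  [/\ (forall d, iter 4 sigma d = d /\ iter 2 sigma d != d),
      (forall d, alpha (alpha d) = d /\ alpha d != d),
      (forall d, over (sigma d) = ~~ over d),
      (forall x y, connect (adj sigma alpha) x y) &
      (* Euler: V + F = E + 2 (genus 0, planar) *)
      (fcard sigma predT + fcard (phi sigma alpha) predT = fcard alpha predT + 2)%N
   /\ (* one component: exactly two straight-ahead orbits (two directions) *)
      fcard (tau sigma alpha) predT = 2%N].

(* The labelling of the regions around a crossing with specified corner e *)
Section Labels.
Variables (H : finType) (X : zmodType) (sigma : H -> H) (over : H -> bool)
          (col : H -> X).
Definition x1 (e : H) : X := col e.
Definition x2 (e : H) : X :=
  if over (sigma e) then col (iter 3 sigma e) else col (sigma e).
Definition x3 (e : H) : X :=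
  if over (sigma e) then col (sigma e) else col (iter 3 sigma e).
Definition x4 (e : H) : X := col (iter 2 sigma e).
(* epsilon = +1 iff (n_o, n_u) is positively oriented *)
Definition epsc (e : H) : int := if over (sigma e) then 1 else -1.
End Labels.

(* col (a function on corners, constant on regions) is a Dehn coloring *)
Definition is_dehn_coloring (H : finType) (X : zmodType) (sigma alpha : H -> H)
  (over : H -> bool) (col : H -> X) : Prop :=
  (forall d, col (phi sigma alpha d) = col d) /\
  (forall e, x1 col e + x3 sigma over col e = x2 sigma over col e + x4 sigma col e).

Definition is_spec (H : finType) (sigma : H -> H) (S : {set H}) : Prop :=
  forall d, #|[set k : 'I_4 | iter k sigma d \in S]| = 1%N.

Definition W (H : finType) (X : zmodType) (sigma : H -> H) (over : H -> bool)
  (col : H -> X) (S : {set H}) : lbchain X :=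
  [seq (epsc sigma over e, (x1 col e, [:: x2 sigma over col e; x3 sigma over col e]))
  | e <- enum S].

(* Main.v *)
Require Import Defs.
From mathcomp Require Import all_boot all_order all_algebra.
From mathcomp Require Import ring.
Set Implicit Arguments. Unset Strict Implicit. Unset Printing Implicit Defensive.
Import GRing.Theory.
Local Open Scope ring_scope.

Section Chains.
Variable X : zmodType.
Implicit Types (z : lbchain X) (g h : lbgen X).

Definition dl h g : int := (h == g)%:R.

Lemma cf_nil g : cf ([::] : lbchain X) g = 0.
Proof. by rewrite /cf big_nil. Qed.

Lemma cf_cons k h z g : cf ((k, h) :: z) g = k * dl h g + cf z g.
Proof.
rewrite /cf big_cons /= /dl; case: (h == g) => /=; first by rewrite mulr1.
by rewrite mulr0 add0r.
Qed.

Lemma cf_cat z1 z2 g : cf (z1 ++ z2) g = cf z1 g + cf z2 g.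
Proof. by rewrite /cf big_cat. Qed.

Lemma cf_flatten (zs : seq (lbchain X)) g :
  cf (flatten zs) g = \sum_(z <- zs) cf z g.
Proof.
elim: zs => [|z zs IH] /=; first by rewrite big_nil cf_nil.
by rewrite cf_cat IH big_cons.
Qed.

Lemma cf_scale k z g : cf (scale_chain k z) g = k * cf z g.
Proof.
rewrite /cf /scale_chain big_map mulr_sumr.
by apply: eq_bigr.
Qed.

Lemma cf_lincomb l g : cf (lincomb l) g = \sum_(kc <- l) kc.1 * cf kc.2 g.
Proof.
rewrite /lincomb cf_flatten big_map; apply: eq_bigr => kc _.
by rewrite cf_scale.
Qed.

Lemma cf_bd z g : cf (bd z) g = \sum_(kg <- z) kg.1 * cf (bd_gen kg.2) g.
Proof.
rewrite /bd cf_flatten big_map; apply: eq_bigr => kc _.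
by rewrite cf_scale.
Qed.

Definition validl (l : seq (int * lbchain X)) :=
  forall kr, kr \in l -> degen_rel 1 kr.2 \/ rho_rel 1 kr.2.

Definition Z1 (F : lbgen X -> int) :=
  exists l, validl l /\ F =1 cf (lincomb l).

Lemma Z1_ext F G : F =1 G -> Z1 G -> Z1 F.
Proof. move=> e [l [v h]]; exists l; split=> // g; by rewrite e h. Qed.

Lemma Z1_0 : Z1 (fun _ => 0).
Proof. exists [::]; split=> // g; by rewrite /lincomb /= cf_nil. Qed.

Lemma Z1_add F G : Z1 F -> Z1 G -> Z1 (fun g => F g + G g).
Proof.
move=> [l1 [v1 h1]] [l2 [v2 h2]]; exists (l1 ++ l2); split.
  by move=> kr; rewrite mem_cat => /orP [/v1|/v2].
by move=> g; rewrite /lincomb map_cat flatten_cat cf_cat h1 h2.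
Qed.

Lemma Z1_scale k F : Z1 F -> Z1 (fun g => k * F g).
Proof.
move=> [l [v h]]; exists [seq (k * kc.1, kc.2) | kc <- l]; split.
  by move=> kr /mapP [kc /v hk ->].
move=> g; rewrite h !cf_lincomb big_map mulr_sumr; apply: eq_bigr => kc _.
by rewrite /= mulrA.
Qed.

Lemma Z1_opp F : Z1 F -> Z1 (fun g => - F g).
Proof. move=> /(Z1_scale (-1)); apply: Z1_ext => g; by rewrite mulN1r. Qed.

Lemma Z1_sum (I : Type) (r : seq I) (P : pred I) (F : I -> lbgen X -> int) :
  (forall i, P i -> Z1 (F i)) -> Z1 (fun g => \sum_(i <- r | P i) F i g).
Proof.
move=> hF; elim: r => [|i r IH].
  by apply: Z1_ext Z1_0 => g; rewrite big_nil.
case Pi: (P i).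
  apply: Z1_ext (Z1_add (hF i Pi) IH) => g; by rewrite big_cons Pi.
by apply: Z1_ext IH => g; rewrite big_cons Pi.
Qed.

Lemma Z1_rel a b : Z1 (fun g => dl (a, [:: b]) g + dl (b, [:: a]) g).
Proof.
exists [:: (1, [:: (1, (a, [:: b])); (1, rho_gen (a, [:: b]) 0)])]; split.
  move=> kr; rewrite inE => /eqP -> /=; right.
  by exists a, [:: b], 0%N.
move=> g; rewrite /lincomb /= ?cats0 /scale_chain /= !cf_cons cf_nil.
by rewrite /rho_gen /=; ring.
Qed.

Lemma bd_gen2 a b c g : cf (bd_gen (a, [:: b; c])) g =
  - dl (a, [:: c]) g + dl (b, [:: br a b c]) g + dl (a, [:: b]) g
  - dl (c, [:: br a b c]) g.
Proof.
rewrite /bd_gen /= !cf_cons cf_nil /face /coface /=.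
ring.
Qed.

End Chains.

Section Main.
Variables (X : zmodType) (H : finType) (sigma alpha : H -> H) (over : H -> bool)
  (col : H -> X).
Hypothesis h4 : forall d, iter 4 sigma d = d.
Hypothesis halpha : forall d, alpha (alpha d) = d /\ alpha d != d.
Hypothesis hC : is_dehn_coloring sigma alpha over col.
Variable S : {set H}.
Hypothesis hS : is_spec sigma S.

Definition T (f : H) (g : lbgen X) : int := dl (col f, [:: col (iter 3 sigma f)]) g.
Definition R (f : H) (g : lbgen X) : int :=
  dl (col f, [:: col (iter 3 sigma f)]) g + dl (col (iter 3 sigma f), [:: col f]) g.

Lemma Z1_R f : Z1 (R f).
Proof. exact: (Z1_rel (col f) (col (iter 3 sigma f))). Qed.

Lemma it31 e : iter 3 sigma (sigma e) = e.
Proof. by rewrite -iterSr h4. Qed.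
Lemma it32 e : iter 3 sigma (iter 2 sigma e) = sigma e.
Proof. by rewrite -iterD (_ : (3 + 2)%N = 1 + 4)%N // iterD h4. Qed.
Lemma it33 e : iter 3 sigma (iter 3 sigma e) = iter 2 sigma e.
Proof. by rewrite -iterD (_ : (3 + 3)%N = 2 + 4)%N // iterD h4. Qed.

Lemma step1 e g :
  epsc sigma over e * cf (bd_gen (x1 col e, [:: x2 sigma over col e; x3 sigma over col e])) g
  = T e g + T (sigma e) g + T (iter 2 sigma e) g + T (iter 3 sigma e) g
    - R (sigma e) g - R (iter 2 sigma e) g.
Proof.
have hd : br (x1 col e) (x2 sigma over col e) (x3 sigma over col e) = x4 sigma col e.
  rewrite /br addrAC (proj2 hC e) [x2 _ _ _ _ + _]addrC addrK //.
rewrite bd_gen2 hd /T /R it31 it32 it33.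
rewrite /x1 /x2 /x3 /x4 /epsc; case: (over (sigma e)); ring.
Qed.

End Main.

Section Main2.
Variables (X : zmodType) (H : finType) (sigma alpha : H -> H) (over : H -> bool)
  (col : H -> X).
Hypothesis h4 : forall d, iter 4 sigma d = d.
Hypothesis halpha : forall d, alpha (alpha d) = d /\ alpha d != d.
Hypothesis hC : is_dehn_coloring sigma alpha over col.
Variable S : {set H}.
Hypothesis hS : is_spec sigma S.

Lemma iter_inv k : (k <= 4)%N -> forall x, iter k sigma (iter (4 - k) sigma x) = x.
Proof. by move=> hk x; rewrite -iterD subnKC // h4. Qed.
Lemma iter_inv' k : (k <= 4)%N -> forall x, iter (4 - k) sigma (iter k sigma x) = x.
Proof. by move=> hk x; rewrite -iterD subnK // h4. Qed.

Lemma step2 g :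
  \sum_(e in S) (T sigma col e g + T sigma col (sigma e) g + T sigma col (iter 2 sigma e) g
     + T sigma col (iter 3 sigma e) g) = \sum_f T sigma col f g.
Proof.
transitivity (\sum_f \sum_(k < 4) if iter k sigma f \in S then T sigma col f g else 0).
  2: { apply: eq_bigr => f _; rewrite -big_mkcond /=.
       rewrite (eq_bigl (fun k : 'I_4 => k \in [set k : 'I_4 | iter k sigma f \in S]));
         last by move=> k; rewrite inE.
       by rewrite sumr_const hS. }
rewrite exchange_big /=.
transitivity (\sum_(k < 4) \sum_(e in S) T sigma col (iter (4 - k) sigma e) g).
  rewrite exchange_big /=; apply: eq_bigr => e _; rewrite !big_ord_recl big_ord0 /=.
  have h4' : sigma (sigma (sigma (sigma e))) = e := h4 e.
  rewrite h4'; ring.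
apply: eq_bigr => k _; rewrite -big_mkcond /=.
rewrite [RHS](reindex (iter (4 - k) sigma)) /=.
  by apply: eq_bigl => e; rewrite iter_inv // ltnW.
apply: onW_bij; exists (iter k sigma) => x; [apply: iter_inv|apply: iter_inv'];
  exact: ltnW.
Qed.

Lemma step3 : Z1 (fun g => \sum_f T sigma col f g).
Proof.
pose A := [pred f | (enum_rank f < enum_rank (alpha f))%N].
have ainj : injective alpha by apply: (can_inj (g := alpha)) => x; case: (halpha x).
apply: (Z1_ext (G := fun g => \sum_(f | A f) R sigma col f g)); last first.
  by apply: Z1_sum => f _; apply: Z1_R.
move=> g; rewrite (bigID A) /= [X in _ + X](reindex_inj ainj).
rewrite [X in _ + X](eq_bigl A); last first.
  move=> f; have [a2 an] := halpha f; rewrite /A /= a2.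
  have ne : nat_of_ord (enum_rank (alpha f)) != nat_of_ord (enum_rank f).
    by apply/eqP => /val_inj /enum_rank_inj h; rewrite h eqxx in an.
  by rewrite -leqNgt leq_eqVlt eq_sym (negbTE ne).
rewrite -big_split; apply: eq_bigr => f _; rewrite /R /T.
have c1 : col (alpha f) = col (iter 3 sigma f).
  by have := proj1 hC (alpha f); rewrite /phi (proj1 (halpha f)) => ->.
have c2 : col (iter 3 sigma (alpha f)) = col f by exact: (proj1 hC f).
by rewrite c1 c2.
Qed.

End Main2.

Theorem lemma4p2 (p : nat) (Hp : prime p) (Hodd : odd p)
  (H : finType) (sigma alpha : H -> H) (over : H -> bool)
  (hD : is_knot_diagram sigma alpha over)
  (col : H -> 'Z_p) (hC : is_dehn_coloring sigma alpha over col)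
  (S : {set H}) (hS : is_spec sigma S) :
  zero_SLB 1 (bd (W sigma over col S)).
Proof.
case: hD => hv ha _ _ _.
have h4 : forall d, iter 4 sigma d = d by move=> d; case: (hv d).
suff: Z1 (cf (bd (W sigma over col S))) by [].
apply: (Z1_ext (G := fun g => \sum_f T sigma col f g
   + - \sum_(e in S) (R sigma col (sigma e) g + R sigma col (iter 2 sigma e) g))).
  move=> g; rewrite cf_bd /W big_map big_enum /=.
  rewrite (eq_bigr _ (fun e _ => step1 h4 hC e g)).
  rewrite -(step2 col h4 hS g) -sumrN -big_split /=; apply: eq_bigr => e _; ring.
apply: Z1_add; first exact: (step3 ha hC).
apply: Z1_opp; apply: Z1_sum => e _; apply: Z1_add; apply: Z1_R.
Qed.
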